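(* Let $a\in\mathbb{O}$ with $a^2=\pm1$. Then the map $\Phi:{}^*\mathbb{O}(a,1)\to\mathbb{O}_{T_{a,\bar a}\circ\sigma_{\mathbb{O}}}$, $x\mapsto \bar a x$, is an isomorphism of algebras. Consequently, if $a^2=-1$, then $\mathbb{O}_{T_{a,\bar a}\circ\sigma_{\mathbb{O}}}$ is isomorphic to ${}^*\mathbb{O}(i,1)$.
   Context: $\mathbb{O}$ is the real octonion algebra, $\sigma_{\mathbb{O}}(x)=\bar x$ its conjugation, $i\in\mathbb{O}$ a fixed element with $i^2=-1$, and $T_{a,\bar a}(x)=ax\bar a$ (well defined by alternativity). For a linear map $f$ of $\mathbb{O}$, $\mathbb{O}_f$ is $\mathbb{O}$ with product $x* y=f(x)y$. For norm-one $a$, ${}^*\mathbb{O}(a,1)$ is $\mathbb{O}$ with product $x\odot y=(\bar x a)y$. *)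

(* Defs.v *)
(* Real octonions built by the Cayley-Dickson construction
   R -> C -> H -> O over a real number field R. *)
From HB Require Import structures.
From mathcomp Require Import all_boot all_order all_algebra.
From mathcomp Require Import reals.
Set Implicit Arguments. Unset Strict Implicit. Unset Printing Implicit Defensive.
Import Order.TTheory GRing.Theory Num.Theory.
Local Open Scope ring_scope.

(* Generic Cayley-Dickson doubling of a *-algebra T (with scalars R).
   (a,b)(c,d) = (ac - conj(d) b, da + b conj(c)),  conj(a,b) = (conj a, -b). *)
Record cd_ops (R T : Type) := CDOps {
  cd_zero : T; cd_one : T;
  cd_add : T -> T -> T; cd_opp : T -> T;
  cd_mul : T -> T -> T; cd_conj : T -> T;
  cd_scale : R -> T -> T }.

Definition cd_double (R T : Type) (o : cd_ops R T) : cd_ops R (T * T) :=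
  CDOps (cd_zero o, cd_zero o) (cd_one o, cd_zero o)
    (fun x y => (cd_add o x.1 y.1, cd_add o x.2 y.2))
    (fun x => (cd_opp o x.1, cd_opp o x.2))
    (fun x y => (cd_add o (cd_mul o x.1 y.1) (cd_opp o (cd_mul o (cd_conj o y.2) x.2)),
                 cd_add o (cd_mul o y.2 x.1) (cd_mul o x.2 (cd_conj o y.1))))
    (fun x => (cd_conj o x.1, cd_opp o x.2))
    (fun r x => (cd_scale o r x.1, cd_scale o r x.2)).

Definition real_ops (R : comRingType) : cd_ops R R :=
  CDOps 0 1 +%R -%R *%R id *%R.

Definition oct (R : comRingType) : Type := ((R * R) * (R * R)) * ((R * R) * (R * R)).

Definition oct_ops (R : comRingType) : cd_ops R (oct R) :=
  cd_double (cd_double (cd_double (real_ops R))).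

Section OctOps.
Variable R : comRingType.
Definition oct0 : oct R := cd_zero (oct_ops R).
Definition oct1 : oct R := cd_one (oct_ops R).
Definition oadd : oct R -> oct R -> oct R := cd_add (oct_ops R).
Definition oopp : oct R -> oct R := cd_opp (oct_ops R).
Definition omul : oct R -> oct R -> oct R := cd_mul (oct_ops R).
Definition oconj : oct R -> oct R := cd_conj (oct_ops R).
Definition oscale : R -> oct R -> oct R := cd_scale (oct_ops R).

(* T_{a,abar}(x) = a x abar  (well defined by alternativity) *)
Definition T_aa (a : oct R) (x : oct R) : oct R := omul (omul a x) (oconj a).

Definition prod_f (f : oct R -> oct R) (x y : oct R) : oct R := omul (f x) y.

Definition prod_star (a : oct R) (x y : oct R) : oct R := omul (omul (oconj x) a) y.

Definition alg_iso (m1 m2 : oct R -> oct R -> oct R) (phi : oct R -> oct R) : Prop :=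
  [/\ (forall x y, phi (oadd x y) = oadd (phi x) (phi y)),
      (forall (r : R) x, phi (oscale r x) = oscale r (phi x)),
      bijective phi &
      (forall x y, phi (m1 x y) = m2 (phi x) (phi y))].
End OctOps.

(* Main.v *)
Require Import Defs.
From mathcomp Require Import all_boot all_order all_algebra.
From mathcomp Require Import reals.
From mathcomp Require Import ring lra.
Set Implicit Arguments. Unset Strict Implicit. Unset Printing Implicit Defensive.
Import Order.TTheory GRing.Theory Num.Theory.
Local Open Scope ring_scope.

Ltac octsplit := rewrite /=; congr (((_,_),(_,_)),((_,_),(_,_))).
Ltac odest x := case: x => [[[? ?] [? ?]] [[? ?] [? ?]]].
Ltac oring := rewrite /omul /oconj /oscale /oadd /oopp /oct1 /oct0 /=; octsplit; ring.

Definition onorm (R : realType) (a : oct R) : R :=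
  let: (((a0,a1),(a2,a3)),((a4,a5),(a6,a7))) := a in
  a0^+2 + a1^+2 + a2^+2 + a3^+2 + a4^+2 + a5^+2 + a6^+2 + a7^+2.

Lemma oconjM (R : realType) (x y : oct R) : oconj (omul x y) = omul (oconj y) (oconj x).
Proof. odest x; odest y; oring. Qed.
Lemma oconjK (R : realType) (x : oct R) : oconj (oconj x) = x.
Proof. odest x; oring. Qed.
Lemma oinv1 (R : realType) (a x : oct R) : omul a (omul (oconj a) x) = oscale (onorm a) x.
Proof. odest a; odest x; oring. Qed.
Lemma oinv2 (R : realType) (a x : oct R) : omul (oconj a) (omul a x) = oscale (onorm a) x.
Proof. odest a; odest x; oring. Qed.
Lemma oTlem (R : realType) (a z : oct R) :
  omul (omul a (omul z a)) (oconj a) = oscale (onorm a) (omul a z).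
Proof. odest a; odest z; oring. Qed.
Lemma oscale1 (R : realType) (x : oct R) : oscale 1 x = x.
Proof. odest x; oring. Qed.
Lemma omulDr (R : realType) (a x y : oct R) : omul a (oadd x y) = oadd (omul a x) (omul a y).
Proof. odest a; odest x; odest y; oring. Qed.
Lemma omulZr (R : realType) (r : R) (a x : oct R) : omul a (oscale r x) = oscale r (omul a x).
Proof. odest a; odest x; oring. Qed.
Lemma mid_real (R : realType) (t : R) (z y : oct R) :
  let a := (((t,0),(0,0)),((0,0),(0,0))) in
  omul (omul a z) (omul (oconj a) y) = omul (oconj a) (omul (omul z a) y).
Proof. odest z; odest y; oring. Qed.
Lemma mid_im (R : realType) (x1 x2 x3 x4 x5 x6 x7 : R) (z y : oct R) :
  let a := (((0,x1),(x2,x3)),((x4,x5),(x6,x7))) in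
  omul (omul a z) (omul (oconj a) y) = omul (oconj a) (omul (omul z a) y).
Proof. odest z; odest y; oring. Qed.



Lemma nz_mul (R:realType) (a b:R) : a != 0 -> a * b = 0 -> b = 0.
Proof. by move=> an /eqP; rewrite mulf_eq0 (negPf an) => /eqP. Qed.

Lemma sq_struct (R : realType) (a : oct R)
  (ha : omul a a = oct1 R \/ omul a a = oopp (oct1 R)) :
  onorm a = 1 /\ (forall z y, omul (omul a z) (omul (oconj a) y) = omul (oconj a) (omul (omul z a) y)).
Proof.
case: a ha => [[[a0 a1] [a2 a3]] [[a4 a5] [a6 a7]]] ha.
rewrite /omul /oct1 /oopp /= in ha.
case: ha => -[e0 e1 e2 e3 e4 e5 e6 e7].
- have a0n : a0 != 0.
    apply/eqP => h0; move: e0; rewrite h0 => e0; nra.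
  have z1 : a1 = 0 by apply: (nz_mul a0n); lra.
  have z2 : a2 = 0 by apply: (nz_mul a0n); lra.
  have z3 : a3 = 0 by apply: (nz_mul a0n); lra.
  have z4 : a4 = 0 by apply: (nz_mul a0n); lra.
  have z5 : a5 = 0 by apply: (nz_mul a0n); lra.
  have z6 : a6 = 0 by apply: (nz_mul a0n); lra.
  have z7 : a7 = 0 by apply: (nz_mul a0n); lra.
  subst; split; last exact: mid_real.
  rewrite /onorm; move: e0; lra.
- have z0 : a0 = 0.
    have h1 : a0 * a1 = 0 by lra.
    have h2 : a0 * a2 = 0 by lra.
    have h3 : a0 * a3 = 0 by lra.
    have h4 : a0 * a4 = 0 by lra.
    have h5 : a0 * a5 = 0 by lra.
    have h6 : a0 * a6 = 0 by lra.
    have h7 : a0 * a7 = 0 by lra.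
    have h : a0 * (a0^+2 + 1) = 0.
      have -> : a0^+2 + 1 = a1^+2+a2^+2+a3^+2+a4^+2+a5^+2+a6^+2+a7^+2 by lra.
      by rewrite !mulrDr !expr2 !mulrA h1 h2 h3 h4 h5 h6 h7 !mul0r !addr0.
    move/eqP: h; rewrite mulf_eq0 => /orP[/eqP //|h]; exfalso.
    move/eqP: h; nra.
  subst; split; last exact: mid_im.
  rewrite /onorm; move: e0; lra.
Qed.

Lemma part1 (R : realType) (a : oct R)
  (ha : omul a a = oct1 R \/ omul a a = oopp (oct1 R)) :
  alg_iso (prod_star a) (prod_f (fun x => T_aa a (oconj x)))
          (fun x => omul (oconj a) x).
Proof.
have [n1 mid] := sq_struct ha.
split.
- move=> x y; exact: omulDr.
- move=> r x; exact: omulZr.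
- exists (fun y => omul a y) => x /=; [rewrite oinv1 | rewrite oinv2]; by rewrite n1 oscale1.
- move=> x y; rewrite /prod_star /prod_f /T_aa oconjM oconjK oTlem n1 oscale1.
  by rewrite mid.
Qed.


Definition quat (R : realType) : Type := (R * R) * (R * R).
Definition qops (R : realType) : cd_ops R (quat R) := cd_double (cd_double (real_ops R)).
Definition qmul (R : realType) : quat R -> quat R -> quat R := cd_mul (qops R).
Definition qconj (R : realType) : quat R -> quat R := cd_conj (qops R).
Definition qadd (R : realType) : quat R -> quat R -> quat R := cd_add (qops R).
Definition qopp (R : realType) : quat R -> quat R := cd_opp (qops R).
Definition qscale (R : realType) : R -> quat R -> quat R := cd_scale (qops R).
Definition qnorm (R : realType) (x : quat R) : R :=
  let: ((x0,x1),(x2,x3)) := x in x0^+2 + x1^+2 + x2^+2 + x3^+2.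
Definition qreal (R : realType) (r : R) : quat R := ((r,0),(0,0)).
Definition qe1 (R : realType) (r : R) : quat R := ((0,r),(0,0)).

Ltac qdest x := case: x => [[? ?] [? ?]].
Ltac qring := rewrite /qmul /qconj /qadd /qopp /qscale /qnorm /qreal /qe1 /=;
  try congr ((_,_),(_,_)); ring.

Lemma omulE (R : realType) (p q r s : quat R) :
  omul (p,q) (r,s) = (qadd (qmul p r) (qopp (qmul (qconj s) q)),
                      qadd (qmul s p) (qmul q (qconj r))).
Proof. by []. Qed.

Definition G (R : realType) (u v : quat R) (x : oct R) : oct R :=
  (qmul (qmul u x.1) (qconj u), qmul (qmul v x.2) (qconj u)).

Definition tau (R : realType) (x : oct R) : oct R :=
  let: (((x0,x1),(x2,x3)),((x4,x5),(x6,x7))) := x in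
  (((x0,x1),(x4,x5)),((x2,x3),(-x6,-x7))).

Ltac unf := rewrite /G /tau /omul /oconj /oscale /oadd /oopp /oct1 /oct0 /qmul /qconj /qadd /qopp /qscale /qnorm /qreal /qe1 /=.
Ltac uring := unf; octsplit; ring.

Lemma Gcomp1 (R : realType) (u v p q r s : quat R) :
  qadd (qmul (qmul (qmul u p) (qconj u)) (qmul (qmul u r) (qconj u)))
       (qopp (qmul (qconj (qmul (qmul v s) (qconj u))) (qmul (qmul v q) (qconj u))))
  = qmul (qmul u (qadd (qscale (qnorm u) (qmul p r)) (qopp (qscale (qnorm v) (qmul (qconj s) q))))) (qconj u).
Proof. qdest u; qdest v; qdest p; qdest q; qdest r; qdest s; qring. Qed.

Lemma Gcomp2 (R : realType) (u v p q r s : quat R) :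
  qadd (qmul (qmul (qmul v s) (qconj u)) (qmul (qmul u p) (qconj u)))
       (qmul (qmul (qmul v q) (qconj u)) (qconj (qmul (qmul u r) (qconj u))))
  = qmul (qmul v (qadd (qscale (qnorm u) (qmul s p)) (qscale (qnorm u) (qmul q (qconj r))))) (qconj u).
Proof. qdest u; qdest v; qdest p; qdest q; qdest r; qdest s; qring. Qed.

Lemma qscale1 (R : realType) (x : quat R) : qscale 1 x = x.
Proof. qdest x; qring. Qed.

Definition oaut (R : realType) (g : oct R -> oct R) :=
  alg_iso (@omul R) (@omul R) g /\ forall x, g (oconj x) = oconj (g x).

Lemma G_mul (R : realType) (u v : quat R) (nu : qnorm u = 1) (nv : qnorm v = 1) (x y : oct R) :
  G u v (omul x y) = omul (G u v x) (G u v y).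
Proof.
case: x => p q; case: y => r s.
rewrite omulE /G /= omulE Gcomp1 Gcomp2 nu nv !qscale1 //.
Qed.

Lemma G_add (R : realType) (u v : quat R) (x y : oct R) :
  G u v (oadd x y) = oadd (G u v x) (G u v y).
Proof. qdest u; qdest v; odest x; odest y; uring. Qed.
Lemma G_scale (R : realType) (u v : quat R) r (x : oct R) :
  G u v (oscale r x) = oscale r (G u v x).
Proof. qdest u; qdest v; odest x; uring. Qed.
Lemma G_conj (R : realType) (u v : quat R) (x : oct R) :
  G u v (oconj x) = oconj (G u v x).
Proof. qdest u; qdest v; odest x; uring. Qed.
Lemma G_inv (R : realType) (u v : quat R) (x : oct R) :
  G (qconj u) (qconj v) (G u v x) =
  (qscale (qnorm u ^+ 2) x.1, qscale (qnorm v * qnorm u) x.2).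
Proof. qdest u; qdest v; case: x => p q; qdest p; qdest q; rewrite /G /=.
congr (_,_); qring. Qed.
Lemma qnorm_conj (R : realType) (u : quat R) : qnorm (qconj u) = qnorm u.
Proof. qdest u; qring. Qed.
Lemma qconjK (R : realType) (u : quat R) : qconj (qconj u) = u.
Proof. qdest u; qring. Qed.

Lemma G_aut (R : realType) (u v : quat R) (nu : qnorm u = 1) (nv : qnorm v = 1) :
  oaut (G u v).
Proof.
split; last exact: G_conj.
split.
- exact: G_add.
- exact: G_scale.
- exists (G (qconj u) (qconj v)) => x.
  + by rewrite G_inv nu nv expr1n mulr1 !qscale1; case: x.
  + have := G_inv (qconj u) (qconj v) x; rewrite !qconjK !qnorm_conj nu nv expr1n mulr1 !qscale1 => ->.
    by case: x.
- exact: G_mul.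
Qed.

Lemma tau_aut (R : realType) : oaut (@tau R).
Proof.
split; last by move=> x; odest x; uring.
split.
- by move=> x y; odest x; odest y; uring.
- by move=> r x; odest x; uring.
- by exists (@tau R) => x; odest x; rewrite /tau /= !opprK.
- by move=> x y; odest x; odest y; uring.
Qed.


Lemma alg_iso_comp (R : realType) (m1 m2 m3 : oct R -> oct R -> oct R) f g :
  alg_iso m1 m2 f -> alg_iso m2 m3 g -> alg_iso m1 m3 (fun x => g (f x)).
Proof.
case=> fa fs fb fm [ga gs gb gm]; split.
- by move=> x y; rewrite fa ga.
- by move=> r x; rewrite fs gs.
- exact: bij_comp.
- by move=> x y; rewrite fm gm.
Qed.

Lemma alg_iso_inv (R : realType) (m1 m2 : oct R -> oct R -> oct R) f :
  alg_iso m1 m2 f -> exists g, alg_iso m2 m1 g.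
Proof.
case=> fa fs [g fK gK] fm; exists g; split.
- by move=> x y; apply: (can_inj fK); rewrite fa !gK.
- by move=> r x; apply: (can_inj fK); rewrite fs !gK.
- by exists f.
- by move=> x y; apply: (can_inj fK); rewrite fm !gK.
Qed.

Lemma oaut_comp (R : realType) (f g : oct R -> oct R) :
  oaut f -> oaut g -> oaut (fun x => g (f x)).
Proof.
case=> fi fc [gi gc]; split; first exact: alg_iso_comp fi gi.
by move=> x; rewrite fc gc.
Qed.

Lemma aut_star (R : realType) (g : oct R -> oct R) (a : oct R) :
  oaut g -> alg_iso (prod_star a) (prod_star (g a)) g.
Proof.
case=> -[ga gs gb gm] gc; split => //.
by move=> x y; rewrite /prod_star !gm gc.
Qed.


Lemma rot_key (R : realType) (s w1 w2 w3 : R) (hs : s^+2 = w1^+2 + w2^+2 + w3^+2) :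
  let m : quat R := ((s + w1, 0), (w3, - w2)) in
  qmul (qmul m ((0,w1),(w2,w3))) (qconj m) = qscale (qnorm m * s) (qe1 1).
Proof.
have h1 : s^+2 * w1 = (w1^+2 + w2^+2 + w3^+2) * w1 by rewrite hs.
have h2 : s^+2 * w2 = (w1^+2 + w2^+2 + w3^+2) * w2 by rewrite hs.
have h3 : s^+2 * w3 = (w1^+2 + w2^+2 + w3^+2) * w3 by rewrite hs.
have h4 : s^+2 * s = (w1^+2 + w2^+2 + w3^+2) * s by rewrite hs.
move=> m; rewrite /m; unf; congr ((_,_),(_,_)); lra.
Qed.

Lemma qnormZ (R : realType) (c : R) (m : quat R) : qnorm (qscale c m) = c^+2 * qnorm m.
Proof. qdest m; qring. Qed.
Lemma qconjZmul (R : realType) (c : R) (m w : quat R) :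
  qmul (qmul (qscale c m) w) (qconj (qscale c m)) = qscale (c^+2) (qmul (qmul m w) (qconj m)).
Proof. qdest m; qdest w; qring. Qed.
Lemma qscaleA (R : realType) (a b : R) (x : quat R) : qscale a (qscale b x) = qscale (a * b) x.
Proof. qdest x; qring. Qed.
Lemma qnorm_ge0 (R : realType) (x : quat R) : 0 <= qnorm x.
Proof. qdest x; rewrite /qnorm /=; nra. Qed.

Lemma inv_sqrt_sq (R : realType) (n : R) : 0 < n -> (1 / Num.sqrt n)^+2 * n = 1.
Proof.
move=> n0; rewrite expr_div_n expr1n sqr_sqrtr ?ltW // mulrC mulrA mulr1 divff //.
by rewrite gt_eqF.
Qed.

Lemma qrot_ex (R : realType) (w1 w2 w3 : R) :
  exists u, qnorm u = 1 /\
    qmul (qmul u ((0,w1),(w2,w3))) (qconj u) = qe1 (Num.sqrt (w1^+2+w2^+2+w3^+2)).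
Proof.
set n := w1^+2+w2^+2+w3^+2; set s := Num.sqrt n.
have n0 : 0 <= n by rewrite /n; nra.
have hs : s^+2 = n by rewrite /s sqr_sqrtr.
have s0 : 0 <= s by rewrite /s sqrtr_ge0.
case: (eqVneq (s + w1) 0) => h1.
- have e23 : w2^+2 + w3^+2 = 0.
    have e : s = - w1 by lra.
    move: hs; rewrite e /n; lra.
  have z2 : w2 = 0 by nra.
  have z3 : w3 = 0 by nra.
  have e : s = - w1 by lra.
  exists ((0,0),(1,0)); split; first by rewrite /qnorm /=; ring.
  rewrite e z2 z3; unf; congr ((_,_),(_,_)); ring.
- set m : quat R := ((s + w1, 0), (w3, - w2)).
  have mpos : 0 < qnorm m.
    rewrite /m /qnorm /=.
    have : 0 < (s + w1)^+2 by rewrite lt0r sqrf_eq0 h1 sqr_ge0.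
    nra.
  exists (qscale (1 / Num.sqrt (qnorm m)) m); split.
    by rewrite qnormZ inv_sqrt_sq.
  rewrite qconjZmul rot_key ?hs // qscaleA mulrA inv_sqrt_sq //.
  by rewrite /qe1 /qscale /=; congr ((_,_),(_,_)); ring.
Qed.

Lemma qnormM (R : realType) (x y : quat R) : qnorm (qmul x y) = qnorm x * qnorm y.
Proof. qdest x; qdest y; qring. Qed.
Lemma qkey2 (R : realType) (u q : quat R) :
  qmul (qmul (qmul u (qconj q)) q) (qconj u) = qscale (qnorm q * qnorm u) (qreal 1).
Proof. qdest u; qdest q; qring. Qed.

Lemma qmulZl3 (R : realType) (c : R) (x q w : quat R) :
  qmul (qmul (qscale c x) q) w = qscale c (qmul (qmul x q) w).
Proof. qdest x; qdest q; qdest w; qring. Qed.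

Lemma div_sqrt (R : realType) (n : R) : 0 < n -> 1 / Num.sqrt n * n = Num.sqrt n.
Proof.
move=> n0; rewrite -{2}(sqr_sqrtr (ltW n0)) expr2 mulrA div1r mulVf ?mul1r //.
by rewrite gt_eqF // sqrtr_gt0.
Qed.

Lemma realign (R : realType) (u q : quat R) (nu : qnorm u = 1) :
  exists v, qnorm v = 1 /\ qmul (qmul v q) (qconj u) = qreal (Num.sqrt (qnorm q)).
Proof.
case: (eqVneq (qnorm q) 0) => hq.
- exists (qreal 1); split; first by rewrite /qnorm /qreal /=; ring.
  rewrite hq sqrtr0; move: hq; case: q => [[a b] [c d]]; rewrite /qnorm /= => hq.
  have za : a = 0 by nra.
  have zb : b = 0 by nra.
  have zc : c = 0 by nra.
  have zd : d = 0 by nra.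
  rewrite za zb zc zd; clear nu; qdest u; qring.
- have qpos : 0 < qnorm q by rewrite lt0r hq qnorm_ge0.
  exists (qscale (1 / Num.sqrt (qnorm q)) (qmul u (qconj q))); split.
    by rewrite qnormZ qnormM qnorm_conj nu (mul1r (qnorm q)) inv_sqrt_sq.
  rewrite qmulZl3 qkey2 nu mulr1 qscaleA div_sqrt //.
  by rewrite /qreal /qscale /=; congr ((_,_),(_,_)); ring.
Qed.


Lemma im_struct (R : realType) (a0 a1 a2 a3 : R) (q : quat R)
  (ha : omul (((a0,a1),(a2,a3)),q) (((a0,a1),(a2,a3)),q) = oopp (oct1 R)) :
  a0 = 0 /\ a1^+2 + a2^+2 + a3^+2 + qnorm q = 1.
Proof.
case: q ha => [[a4 a5] [a6 a7]] ha.
rewrite /omul /oct1 /oopp /= in ha.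
case: ha => e0 e1 e2 e3 e4 e5 e6 e7.
have z0 : a0 = 0.
  have h1 : a0 * a1 = 0 by lra.
  have h2 : a0 * a2 = 0 by lra.
  have h3 : a0 * a3 = 0 by lra.
  have h4 : a0 * a4 = 0 by lra.
  have h5 : a0 * a5 = 0 by lra.
  have h6 : a0 * a6 = 0 by lra.
  have h7 : a0 * a7 = 0 by lra.
  have h : a0 * (a0^+2 + 1) = 0.
    have -> : a0^+2 + 1 = a1^+2+a2^+2+a3^+2+a4^+2+a5^+2+a6^+2+a7^+2 by lra.
    by rewrite !mulrDr !expr2 !mulrA h1 h2 h3 h4 h5 h6 h7 !mul0r !addr0.
  move/eqP: h; rewrite mulf_eq0 => /orP[/eqP //|h]; exfalso.
  move/eqP: h; nra.
split => //; move: e0; rewrite z0 /qnorm /=; lra.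
Qed.

Definition oe1 (R : realType) : oct R := (((0,1),(0,0)),((0,0),(0,0))).

Lemma G_pair (R : realType) (u v p q : quat R) :
  G u v (p,q) = (qmul (qmul u p) (qconj u), qmul (qmul v q) (qconj u)).
Proof. by []. Qed.

Lemma tau_pair (R : realType) (c d : R) :
  tau (qe1 c, qreal d) = (((0,c),(d,0)),((0,0),(0,0))).
Proof. by rewrite /tau /qe1 /qreal /= oppr0. Qed.

Lemma qmul0 (R : realType) (u w : quat R) : qmul (qmul u ((0,0),(0,0))) w = ((0,0),(0,0)).
Proof. qdest u; qdest w; qring. Qed.

Lemma exists_aut (R : realType) (a : oct R) (ha : omul a a = oopp (oct1 R)) :
  exists g, oaut g /\ g a = oe1 R.
Proof.
case: a ha => [[[a0 a1] [a2 a3]] q] ha.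
have [z0 n1] := im_struct ha; subst a0.
have [u1 [nu1 e1]] := qrot_ex a1 a2 a3.
have [v1 [nv1 e2]] := realign q nu1.
set c := Num.sqrt _ in e1; set d := Num.sqrt _ in e2.
have [u2 [nu2 e3]] := qrot_ex c d 0.
have hc : c^+2 = a1^+2+a2^+2+a3^+2 by rewrite /c sqr_sqrtr //; nra.
have hd : d^+2 = qnorm q by rewrite /d sqr_sqrtr // qnorm_ge0.
have cd : c^+2 + d^+2 + 0^+2 = 1 by rewrite hc hd; lra.
rewrite cd sqrtr1 in e3.
exists (fun x => G u2 u2 (tau (G u1 v1 x))); split.
  exact: (oaut_comp (oaut_comp (G_aut nu1 nv1) (@tau_aut R)) (G_aut nu2 nu2)).
change (G u2 u2 (tau (G u1 v1 (((0,a1),(a2,a3)),q))) = oe1 R).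
by rewrite (G_pair u1 v1) e1 e2 tau_pair G_pair e3 qmul0.
Qed.


Theorem lemma13 (R : realType) (i : oct R) (hi : omul i i = oopp (oct1 R))
  (a : oct R) (ha : omul a a = oct1 R \/ omul a a = oopp (oct1 R)) :
  alg_iso (prod_star a) (prod_f (fun x => T_aa a (oconj x)))
          (fun x => omul (oconj a) x)
  /\ (omul a a = oopp (oct1 R) ->
      exists psi : oct R -> oct R,
        alg_iso (prod_f (fun x => T_aa a (oconj x))) (prod_star i) psi).
Proof.
split; first exact: part1 ha.
move=> ha'.
have [phinv iso1] := alg_iso_inv (part1 ha).
have [ga [gaut gae]] := exists_aut ha'.
have [gi [giaut gie]] := exists_aut hi.
have isoa := aut_star a gaut; rewrite gae in isoa.
have isoi := aut_star i giaut; rewrite gie in isoi.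
have [gii isoi'] := alg_iso_inv isoi.
exists (fun x => gii (ga (phinv x))).
exact: alg_iso_comp (alg_iso_comp iso1 isoa) isoi'.
Qed.
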